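(* Let $V$, $M$ and the bilinear form $b:V\times M\to\mathbb{R}$ be as described in the context, and let $B^T:M\to V'$ be defined by ${}_{V}\langle \Sigma, B^T\psi\rangle_{V'}=b(\Sigma,\psi)$ for all $\Sigma\in V$. Then $\operatorname{Ker} B^T=\{0\}$, i.e. if $\psi\in M$ satisfies $b(\Sigma,\psi)=0$ for all $\Sigma\in V$, then $\psi=0$.
   Context: Network: a stent is modelled by a finite connected graph with vertices $j=1,\dots,n_{\mathcal V}$ located at points $\mathcal V_j\in\mathbb{R}^3$ and oriented edges $i=1,\dots,n_{\mathcal E}$. $J_j^-$ is the set of edges leaving vertex $j$ and $J_j^+$ the set of edges entering vertex $j$. Edge $i$ is a curve of length $\ell^i>0$ with arc-length parametrization $\Phi^i:[0,\ell^i]\to\mathbb{R}^3$ (smooth), with $\Phi^i(0)$ the position of the vertex it leaves and $\Phi^i(\ell^i)$ the position of the vertex it enters; $t^i=(\Phi^i)'$ is the unit tangent. $Q^i:[0,\ell^i]\to\mathbb{R}^{3\times 3}$ is continuous with orthogonal values and $H^i\in\mathbb{R}^{3\times3}$ is a positive definite diagonal matrix. Loads $f^i\in L^2(0,\ell^i;\mathbb{R}^3)$. Matrices: $A^+_{I}\in\mathbb{R}^{3n_{\mathcal V}\times 3n_{\mathcal E}}$ is the block matrix whose $3\times3$ block in block row $j$, block column $i$ is $I_3$ if $i\in J_j^+$ and $0$ otherwise; $A^-_{I}$ is defined the same way with $J_j^-$. $\mathbb P^i_{\mathcal E}\in\mathbb{R}^{3\times 3n_{\mathcal E}}$ extracts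 the $i$-th block of three coordinates. Spaces: $L^2(\mathcal N;\mathbb{R}^3)=\prod_{i=1}^{n_{\mathcal E}}L^2(0,\ell^i;\mathbb{R}^3)$ and $L^2_{H^1}(\mathcal N;\mathbb{R}^3)=\prod_{i=1}^{n_{\mathcal E}}H^1(0,\ell^i;\mathbb{R}^3)$ (no continuity at vertices imposed), with norms $(\sum_i\|y^i\|^2)^{1/2}$. $\int_{\mathcal N}v:=\sum_i\int_0^{\ell^i}v^i\,ds$. $V=L^2(\mathcal N;\mathbb{R}^3)\times L^2(\mathcal N;\mathbb{R}^3)\times(\mathbb{R}^{3n_{\mathcal E}})^4\times\mathbb{R}^3\times\mathbb{R}^3$ with elements $\Sigma=(q,p,P_+,P_-,Q_+,Q_-,\alpha,\beta)$ (and $\Gamma=(\xi,\theta,\Theta_+,\Theta_-,\Xi_+,\Xi_-,\gamma,\delta)$), $M=L^2_{H^1}(\mathcal N;\mathbb{R}^3)\times L^2_{H^1}(\mathcal N;\mathbb{R}^3)\times\mathbb{R}^{3n_{\mathcal V}}\times\mathbb{R}^{3n_{\mathcal V}}$ with elements $\psi=(v,w,V,W)$; both carry the product Hilbert norms. Components of vectors in $\mathbb{R}^{3n_{\mathcal E}}$ are written $P_+=(P_+^1,\dots,P_+^{n_{\mathcal E}})$, etc. Forms: $a(\Sigma,\Gamma)=\sum_i\int_0^{\ell^i}Q^i(H^i)^{-1}(Q^i)^Tq^i\cdot\xi^i\,ds$; $b(\Sigma,\psi)=\sum_i\int_0^{\ell^i}\big(-p^i\cdot(\partial_sv^i+t^i\times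 w^i)-q^i\cdot\partial_sw^i\big)ds+\sum_i\big(P^i_+\cdot v^i(\ell^i)-P^i_-\cdot v^i(0)\big)+\sum_i\big(Q^i_+\cdot w^i(\ell^i)-Q^i_-\cdot w^i(0)\big)-(A^+_IP_+-A^-_IP_-)\cdot V-(A^+_IQ_+-A^-_IQ_-)\cdot W+\alpha\cdot\int_{\mathcal N}v+\beta\cdot\int_{\mathcal N}w$; $f(\psi)=-\sum_i\int_0^{\ell^i}f^i\cdot v^i\,ds$. *)

(* Defs.v *)
From HB Require Import structures.
From mathcomp Require Import all_boot all_order all_algebra.
From mathcomp Require Import all_classical all_reals all_analysis.
Set Implicit Arguments. Unset Strict Implicit. Unset Printing Implicit Defensive.
Import Order.TTheory GRing.Theory Num.Theory.
Local Open Scope classical_set_scope.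
Local Open Scope ring_scope.

Section Defs.
Variable R : realType.

Definition dot3 (u v : 'rV[R]_3) : R := \sum_(k < 3) u ord0 k * v ord0 k.

Definition cross3 (u v : 'rV[R]_3) : 'rV[R]_3 :=
  let c (x : 'rV[R]_3) (n : nat) := x ord0 (inord n) in
  \row_(k < 3)
    (if val k == 0%N then c u 1%N * c v 2%N - c u 2%N * c v 1%N
     else if val k == 1%N then c u 2%N * c v 0%N - c u 0%N * c v 2%N
     else c u 0%N * c v 1%N - c u 1%N * c v 0%N).

Definition mu := @lebesgue_measure R.

Definition int0 (l : R) (f : R -> R) : R := Rintegral mu `[0, l] f.

Definition L2 (l : R) (f : R -> 'rV[R]_3) : Prop :=
  forall k : 'I_3,
    measurable_fun `[0, l] (fun s => f s ord0 k) /\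
    mu.-integrable `[0, l] (fun s => ((f s ord0 k) ^+ 2)%:E).

(* (v, dv): v is the (absolutely) continuous representative of an element of
   H^1(0,l;R^3) and dv in L^2(0,l;R^3) is its weak derivative. *)
Definition H1 (l : R) (v dv : R -> 'rV[R]_3) : Prop :=
  L2 l dv /\
  forall s, 0 <= s <= l -> forall k : 'I_3,
    v s ord0 k = v 0 ord0 k + int0 s (fun r => dv r ord0 k).

(* the block matrices A^+_I, A^-_I applied to P in (R^3)^{n_E}:
   (A P)_j = sum of P^i over the edges i entering (resp. leaving) vertex j *)
Definition Amul (nV nE : nat) (e : 'I_nE -> 'I_nV) (P : 'I_nE -> 'rV[R]_3)
  (j : 'I_nV) : 'rV[R]_3 := \sum_(i < nE | e i == j) P i.

Definition dotV (nV : nat) (X Y : 'I_nV -> 'rV[R]_3) : R :=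
  \sum_(j < nV) dot3 (X j) (Y j).

Definition intN (nE : nat) (l : 'I_nE -> R) (v : 'I_nE -> R -> 'rV[R]_3)
  : 'rV[R]_3 := \row_(k < 3) \sum_(i < nE) int0 (l i) (fun s => v i s ord0 k).

(* the bilinear form b(Sigma, psi).  Sigma = (q,p,Pp,Pm,Qp,Qm,alpha,beta),
   psi = (v,w,V,W) with dv, dw the weak derivatives of v, w;
   t is the family of unit tangents. *)
Definition bform (nV nE : nat) (src tgt : 'I_nE -> 'I_nV) (l : 'I_nE -> R)
  (t : 'I_nE -> R -> 'rV[R]_3)
  (q p : 'I_nE -> R -> 'rV[R]_3) (Pp Pm Qp Qm : 'I_nE -> 'rV[R]_3)
  (alpha beta : 'rV[R]_3)
  (v dv w dw : 'I_nE -> R -> 'rV[R]_3) (VV WW : 'I_nV -> 'rV[R]_3) : R :=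
  \sum_(i < nE) int0 (l i) (fun s =>
      - dot3 (p i s) (dv i s + cross3 (t i s) (w i s)) - dot3 (q i s) (dw i s))
  + \sum_(i < nE) (dot3 (Pp i) (v i (l i)) - dot3 (Pm i) (v i 0))
  + \sum_(i < nE) (dot3 (Qp i) (w i (l i)) - dot3 (Qm i) (w i 0))
  - dotV (fun j => Amul tgt Pp j - Amul src Pm j) VV
  - dotV (fun j => Amul tgt Qp j - Amul src Qm j) WW
  + dot3 alpha (intN l v) + dot3 beta (intN l w).

Definition tangent (nE : nat) (Phi : 'I_nE -> R -> 'rV[R]_3) (i : 'I_nE) (s : R)
  : 'rV[R]_3 := \row_(k < 3) derive1 (fun r => Phi i r ord0 k) s.

Definition smooth3 (f : R -> 'rV[R]_3) : Prop :=
  forall (k : 'I_3) (n : nat) (s : R), derivable (derive1n n (fun r => f r ord0 k)) s 1.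

End Defs.

Definition adjG (nV nE : nat) (src tgt : 'I_nE -> 'I_nV) : rel 'I_nV :=
  fun j j' => [exists i, ((src i == j) && (tgt i == j')) || ((src i == j') && (tgt i == j))].

Definition connectedG (nV nE : nat) (src tgt : 'I_nE -> 'I_nV) : Prop :=
  forall j j' : 'I_nV, connect (adjG src tgt) j j'.

(* Main.v *)
Require Import Defs.
From HB Require Import structures.
From mathcomp Require Import all_boot all_order all_algebra.
From mathcomp Require Import all_classical all_reals all_analysis.
From mathcomp Require Import lra ring.
Import Order.TTheory GRing.Theory Num.Theory.
Local Open Scope classical_set_scope.
Local Open Scope ring_scope.

Section Aux.
Variable R : realType.

Lemma dot3_ge0 (u : 'rV[R]_3) : 0 <= dot3 u u.
Proof. by rewrite /dot3 sumr_ge0 // => k _; rewrite -expr2 sqr_ge0. Qed.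

Lemma dot3_eq0 (u : 'rV[R]_3) : dot3 u u = 0 -> u = 0.
Proof.
move=> H; apply/rowP => k; rewrite mxE.
have := psumr_eq0P (fun k _ => (sqr_ge0 (u ord0 k) : 0 <= u ord0 k * u ord0 k)) H.
move=> /(_ k isT) /eqP; rewrite mulf_eq0 orbb => /eqP ->.
by [].
Qed.

Lemma L2_ae0 (l : R) (f : R -> 'rV[R]_3) : L2 l f ->
  int0 l (fun s => dot3 (f s) (f s)) = 0 ->
  {ae @mu R, forall s, `[0, l]%classic s -> f s = 0}.
Proof.
move=> hL H.
have mD : measurable (`[0, l]%classic : set (measurableTypeR R)) := measurable_itv `[0, l].
have hint : (@mu R).-integrable `[0, l]%classic (EFin \o (fun s => dot3 (f s) (f s))).
  have -> : EFin \o (fun s => dot3 (f s) (f s)) =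
     (fun s => \sum_(k < 3) ((f s ord0 k)^+2)%:E)%E.
    apply/funext => s /=; rewrite /dot3 sumEFin; congr (_%:E).
  by apply: integrable_sum => [|k _]; first exact: mD; exact: (hL k).2.
have h0 : (\int[@mu R]_(x in `[0%R, l]%classic) (dot3 (f x) (f x))%:E = 0)%E.
  have fin := integrable_fin_num mD hint.
  by rewrite -[LHS]fineK //; move: H; rewrite /int0 /Rintegral => ->.
have hm := measurable_int _ hint.
have habs : (\int[@mu R]_(x in `[0%R, l]%classic) `|(EFin \o (fun s => dot3 (f s) (f s))) x|)%E = 0%E.
  rewrite -h0; apply: eq_integral => s _ /=.
  by rewrite ger0_norm // dot3_ge0.
have hae := (ae_eq_integral_abs (@mu R) mD hm).1 habs.
move: hae; apply: filterS => s Hs Ds.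
apply: dot3_eq0.
by have := Hs Ds => -[].
Qed.


Lemma sub0l (s l : R) : s <= l -> (`[0, s]%classic : set R) `<=` `[0, l]%classic.
Proof.
move=> sl x /=; rewrite !in_itv /= => /andP[a b].
by rewrite a (le_trans b sl).
Qed.
Arguments sub0l {s l}.

Lemma ae0_int0 (l : R) (f : R -> 'rV[R]_3) : L2 l f ->
  {ae @mu R, forall s, `[0, l]%classic s -> f s = 0} ->
  forall s, 0 <= s <= l -> forall k, int0 s (fun r => f r ord0 k) = 0.
Proof.
move=> hL hae s /andP[s0 sl] k.
have mD : measurable (`[0, l]%classic : set (measurableTypeR R)) := measurable_itv `[0, l].
have mDs : measurable (`[0, s]%classic : set (measurableTypeR R)) := measurable_itv `[0, s].
rewrite /int0 /Rintegral.
rewrite (@ae_eq_integral _ _ _ (@mu R) _ (cst 0%E)) ?integral0 //.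
- apply/measurable_realfun.measurable_EFinP.
  have := (hL k).1.
  move=> hm.
  have hm2 := measurable_funS (measurable_itv `[0, l]) (sub0l sl) hm.
  exact hm2.
- apply: (@filterS _ _ (ae_filter_ringOfSetsType (@mu R)) _ _ _ hae) => x Hx Dx.
  by rewrite /= (Hx (sub0l sl _ Dx)) mxE.
Qed.


Lemma H1_const (l : R) (v dv : R -> 'rV[R]_3) : H1 l v dv ->
  {ae @mu R, forall s, `[0, l]%classic s -> dv s = 0} ->
  forall s, 0 <= s <= l -> v s = v 0.
Proof.
move=> [hL hv] hae s hs; apply/rowP => k.
by rewrite (hv s hs k) (@ae0_int0 l dv hL hae s hs) addr0.
Qed.

Lemma dot3C (u w : 'rV[R]_3) : dot3 u w = dot3 w u.
Proof. by apply: eq_bigr => k _; rewrite mulrC. Qed.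

Lemma dot30l (u : 'rV[R]_3) : dot3 0 u = 0.
Proof. by rewrite /dot3 big1 // => k _; rewrite mxE mul0r. Qed.

Lemma dot30r (u : 'rV[R]_3) : dot3 u 0 = 0.
Proof. by rewrite dot3C dot30l. Qed.

Lemma dot3Br (u a b : 'rV[R]_3) : dot3 u (a - b) = dot3 u a - dot3 u b.
Proof.
rewrite /dot3 -sumrB; apply: eq_bigr => k _.
by rewrite !mxE mulrBr.
Qed.

Lemma dot3Bl (u a b : 'rV[R]_3) : dot3 (a - b) u = dot3 a u - dot3 b u.
Proof. by rewrite dot3C dot3Br !(dot3C u). Qed.

Lemma dot3Nl (a b : 'rV[R]_3) : dot3 (- a) b = - dot3 a b.
Proof.
rewrite /dot3 -sumrN; apply: eq_bigr => k _.
by rewrite !mxE mulNr.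
Qed.

Lemma dot3_suml (I : finType) (P : pred I) (F : I -> 'rV[R]_3) (u : 'rV[R]_3) :
  dot3 (\sum_(i | P i) F i) u = \sum_(i | P i) dot3 (F i) u.
Proof.
rewrite /dot3 exchange_big /=; apply: eq_bigr => k _.
by rewrite summxE mulr_suml.
Qed.

Lemma cross30r (u : 'rV[R]_3) : cross3 u 0 = 0.
Proof.
apply/rowP => k; rewrite !mxE.
by case: ifP => _; [|case: ifP => _]; rewrite ?mxE !mulr0 subrr.
Qed.

Lemma sum_dot3_eq0 (I : finType) (F : I -> 'rV[R]_3) :
  \sum_i dot3 (F i) (F i) = 0 -> forall i, F i = 0.
Proof.
move=> H i; apply: dot3_eq0.
exact: (psumr_eq0P (fun i _ => dot3_ge0 (F i)) H).
Qed.

Lemma dotV_Amul (nV nE : nat) (e : 'I_nE -> 'I_nV) (P : 'I_nE -> 'rV[R]_3)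
  (X : 'I_nV -> 'rV[R]_3) :
  dotV (fun j => Amul e P j) X = \sum_i dot3 (P i) (X (e i)).
Proof.
rewrite /dotV /Amul.
under eq_bigr do rewrite dot3_suml.
rewrite (exchange_big_dep predT) //=.
apply: eq_bigr => i _.
by rewrite (big_pred1 (e i)) // => j; rewrite /= eq_sym.
Qed.

Lemma dotVB (nV : nat) (A B X : 'I_nV -> 'rV[R]_3) :
  dotV (fun j => A j - B j) X = dotV A X - dotV B X.
Proof. by rewrite /dotV -sumrB; apply: eq_bigr => j _; rewrite dot3Bl. Qed.

Lemma bformE (nV nE : nat) (src tgt : 'I_nE -> 'I_nV) (l : 'I_nE -> R)
  (t : 'I_nE -> R -> 'rV[R]_3)
  (q p : 'I_nE -> R -> 'rV[R]_3) (Pp Pm Qp Qm : 'I_nE -> 'rV[R]_3)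
  (alpha beta : 'rV[R]_3)
  (v dv w dw : 'I_nE -> R -> 'rV[R]_3) (VV WW : 'I_nV -> 'rV[R]_3) :
  bform src tgt l t q p Pp Pm Qp Qm alpha beta v dv w dw VV WW =
  \sum_(i < nE) int0 (l i) (fun s =>
      - dot3 (p i s) (dv i s + cross3 (t i s) (w i s)) - dot3 (q i s) (dw i s))
  + \sum_i dot3 (Pp i) (v i (l i) - VV (tgt i))
  - \sum_i dot3 (Pm i) (v i 0 - VV (src i))
  + \sum_i dot3 (Qp i) (w i (l i) - WW (tgt i))
  - \sum_i dot3 (Qm i) (w i 0 - WW (src i))
  + dot3 alpha (intN l v) + dot3 beta (intN l w).
Proof.
rewrite /bform !dotVB !dotV_Amul.
under [X in _ = _ + X - _ + _ - _ + _ + _]eq_bigr do rewrite dot3Br.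
under [X in _ = _ + _ - X + _ - _ + _ + _]eq_bigr do rewrite dot3Br.
under [X in _ = _ + _ - _ + X - _ + _ + _]eq_bigr do rewrite dot3Br.
under [X in _ = _ + _ - _ + _ - X + _ + _]eq_bigr do rewrite dot3Br.
rewrite !sumrB.
lra.
Qed.


Lemma int0_cst (l c : R) : 0 < l -> int0 l (fun _ => c) = c * l.
Proof.
move=> hl.
have mD : measurable (`[0, l]%classic : set (measurableTypeR R)) := measurable_itv `[0, l].
rewrite /int0 Rintegral_cst //.
have E : (@mu R) `[0, l]%classic = l%:E.
  by rewrite /mu lebesgue_measure_itv /= lte_fin hl /= oppr0 adde0.
transitivity (c * fine (l%:E : \bar R)); last by [].
congr (c * fine _); exact E.
Qed.

Lemma int0_eq (l : R) (f g : R -> R) : (forall s, 0 <= s <= l -> f s = g s) ->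
  int0 l f = int0 l g.
Proof.
move=> H; rewrite /int0; apply: eq_Rintegral => x.
rewrite in_setE /= in_itv /=; exact: H.
Qed.

Lemma graph_const (nV nE : nat) (src tgt : 'I_nE -> 'I_nV) (X : 'I_nV -> 'rV[R]_3) :
  connectedG src tgt -> (forall i, X (src i) = X (tgt i)) -> forall j j', X j = X j'.
Proof.
move=> hc hX j j'; move: (hc j j') => /connectP [p pth ->] {j'}.
elim: p j pth => [|a p IH] j //= /andP [hadj hp].
rewrite -(IH a hp).
move: hadj => /existsP [i /orP [/andP [/eqP <- /eqP <-] | /andP [/eqP <- /eqP <-]]] //.
Qed.

Lemma zero_lemma (nV nE : nat) (src tgt : 'I_nE -> 'I_nV) (l : 'I_nE -> R)
  (u : 'I_nE -> R -> 'rV[R]_3) (X : 'I_nV -> 'rV[R]_3) :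
  (0 < nE)%N -> (forall i, 0 < l i) -> connectedG src tgt ->
  (forall i s, 0 <= s <= l i -> u i s = X (src i)) ->
  (forall i, X (src i) = X (tgt i)) -> intN l u = 0 -> forall j, X j = 0.
Proof.
move=> hE hl hc hu hX hI.
pose i0 := Ordinal hE.
have hall : forall j, X j = X (src i0) by move=> j; exact: graph_const.
have hc0 : X (src i0) = 0.
  apply/rowP => k; rewrite mxE.
  have := congr1 (fun M : 'rV[R]_3 => M ord0 k) hI; rewrite !mxE /=.
  under eq_bigr => i _.
    rewrite (@int0_eq _ _ (fun _ => X (src i0) ord0 k)); last first.
      by move=> s hs; rewrite hu // hall.
    rewrite int0_cst //.
  over.
  rewrite -mulr_sumr => /eqP; rewrite mulf_eq0 => /orP [/eqP //|].
  have hpos : 0 < \sum_(i < nE) l i.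
    rewrite (bigD1 i0) //=.
    have := hl i0.
    have : 0 <= \sum_(i < nE | i != i0) l i by apply: sumr_ge0 => i _; exact: ltW.
    lra.
  by rewrite gt_eqF.
by move=> j; rewrite hall.
Qed.


Lemma L2_0 (l : R) : L2 l (fun _ => 0).
Proof.
move=> k; split.
  have -> : (fun s : R => (0 : 'rV[R]_3) ord0 k) = cst 0.
    by apply/funext => s; rewrite mxE.
  exact: measurable_cst.
have -> : (fun s : R => (((0 : 'rV[R]_3) ord0 k) ^+ 2)%:E) = cst 0%E.
  by apply/funext => s; rewrite mxE expr0n.
exact: integrable0.
Qed.

Lemma L2N (l : R) (f : R -> 'rV[R]_3) : L2 l f -> L2 l (fun s => - f s).
Proof.
move=> hL k; split.
  have -> : (fun s : R => (- f s) ord0 k) = -%R \o (fun s => f s ord0 k).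
    by apply/funext => s; rewrite mxE.
  apply: measurableT_comp; first exact: measurable_realfun.oppr_measurable.
  exact: (hL k).1.
have -> : (fun s : R => (((- f s) ord0 k) ^+ 2)%:E) = (fun s => ((f s ord0 k) ^+ 2)%:E).
  by apply/funext => s; rewrite mxE sqrrN.
exact: (hL k).2.
Qed.

Lemma int0_0 (l : R) : int0 l (fun _ => 0) = 0.
Proof. by rewrite /int0 /Rintegral integral0_eq. Qed.

Lemma sum_dot30 (n : nat) (F : 'I_n -> 'rV[R]_3) : \sum_(i < n) dot3 0 (F i) = 0.
Proof. by rewrite big1 // => i _; exact: dot30l. Qed.

Lemma sum_int_ae (nE : nat) (l : 'I_nE -> R) (f : 'I_nE -> R -> 'rV[R]_3) :
  (forall i, L2 (l i) (f i)) ->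
  \sum_i int0 (l i) (fun s => dot3 (f i s) (f i s)) = 0 ->
  forall i, {ae @mu R, forall s, `[0, l i]%classic s -> f i s = 0}.
Proof.
move=> hL H i; apply: L2_ae0 => //.
apply: (psumr_eq0P _ H) => // j _.
by rewrite /int0 Rintegral_ge0 // => x _; exact: dot3_ge0.
Qed.

End Aux.

Theorem lemma3p1 (R : realType) (nV nE : nat)
  (src tgt : 'I_nE -> 'I_nV)            (* edge i leaves src i, enters tgt i *)
  (pos : 'I_nV -> 'rV[R]_3)             (* vertex positions *)
  (l : 'I_nE -> R) (Phi : 'I_nE -> R -> 'rV[R]_3)
  (hE : (0 < nE)%N)
  (hconn : connectedG src tgt)
  (hl : forall i, 0 < l i)
  (hsmooth : forall i, smooth3 (Phi i))
  (hunit : forall i s, 0 <= s <= l i -> dot3 (tangent Phi i s) (tangent Phi i s) = 1)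
  (hPhi0 : forall i, Phi i 0 = pos (src i))
  (hPhil : forall i, Phi i (l i) = pos (tgt i))
  (v dv w dw : 'I_nE -> R -> 'rV[R]_3) (VV WW : 'I_nV -> 'rV[R]_3)
  (hv : forall i, H1 (l i) (v i) (dv i))
  (hw : forall i, H1 (l i) (w i) (dw i))
  (hker : forall (q p : 'I_nE -> R -> 'rV[R]_3) (Pp Pm Qp Qm : 'I_nE -> 'rV[R]_3)
            (alpha beta : 'rV[R]_3),
          (forall i, L2 (l i) (q i)) -> (forall i, L2 (l i) (p i)) ->
          bform src tgt l (tangent Phi) q p Pp Pm Qp Qm alpha beta v dv w dw VV WW = 0) :
  (forall i s, 0 <= s <= l i -> v i s = 0 /\ w i s = 0) /\
  (forall i, {ae @mu R, forall s, `[0, l i]%classic s -> dv i s = 0 /\ dw i s = 0}) /\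
  (forall j, VV j = 0) /\ (forall j, WW j = 0).
Proof.
pose Z := fun (_ : 'I_nE) (_ : R) => (0 : 'rV[R]_3).
pose Z0 := fun (_ : 'I_nE) => (0 : 'rV[R]_3).
have LZ : forall i, L2 (l i) (Z i) by move=> i; exact: L2_0.
have intZ : \sum_(i < nE) int0 (l i) (fun s => - dot3 (Z i s) (dv i s + cross3 (tangent Phi i s) (w i s)) - dot3 (Z i s) (dw i s)) = 0.
  rewrite big1 // => i _.
  have -> : (fun s => - dot3 (Z i s) (dv i s + cross3 (tangent Phi i s) (w i s)) - dot3 (Z i s) (dw i s)) = (fun _ => 0).
    by apply/funext => s; rewrite /Z !dot30l; lra.
  exact: int0_0.
have hvl : forall i, v i (l i) = VV (tgt i).
  have := hker Z Z (fun i => v i (l i) - VV (tgt i)) Z0 Z0 Z0 0 0 LZ LZ.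
  rewrite bformE intZ /Z0 !sum_dot30 !dot30l ?subr0 ?addr0 ?add0r ?sub0r ?subr0 ?addr0 ?add0r.
  by move=> /sum_dot3_eq0 H i; apply/eqP; rewrite -subr_eq0 H.
have hv0 : forall i, v i 0 = VV (src i).
  have := hker Z Z Z0 (fun i => v i 0 - VV (src i)) Z0 Z0 0 0 LZ LZ.
  rewrite bformE intZ /Z0 !sum_dot30 !dot30l ?subr0 ?addr0 ?add0r ?sub0r ?subr0 ?addr0 ?add0r.
  by move=> /eqP; rewrite oppr_eq0 => /eqP /sum_dot3_eq0 H i; apply/eqP; rewrite -subr_eq0 H.
have hwl : forall i, w i (l i) = WW (tgt i).
  have := hker Z Z Z0 Z0 (fun i => w i (l i) - WW (tgt i)) Z0 0 0 LZ LZ.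
  rewrite bformE intZ /Z0 !sum_dot30 !dot30l ?subr0 ?addr0 ?add0r ?sub0r ?subr0 ?addr0 ?add0r.
  by move=> /sum_dot3_eq0 H i; apply/eqP; rewrite -subr_eq0 H.
have hw0 : forall i, w i 0 = WW (src i).
  have := hker Z Z Z0 Z0 Z0 (fun i => w i 0 - WW (src i)) 0 0 LZ LZ.
  rewrite bformE intZ /Z0 !sum_dot30 !dot30l ?subr0 ?addr0 ?add0r ?sub0r ?subr0 ?addr0 ?add0r.
  by move=> /eqP; rewrite oppr_eq0 => /eqP /sum_dot3_eq0 H i; apply/eqP; rewrite -subr_eq0 H.
have hIv : intN l v = 0.
  have := hker Z Z Z0 Z0 Z0 Z0 (intN l v) 0 LZ LZ.
  rewrite bformE intZ /Z0 !sum_dot30 !dot30l ?subr0 ?addr0 ?add0r ?sub0r ?subr0 ?addr0 ?add0r.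
  exact: dot3_eq0.
have hIw : intN l w = 0.
  have := hker Z Z Z0 Z0 Z0 Z0 0 (intN l w) LZ LZ.
  rewrite bformE intZ /Z0 !sum_dot30 !dot30l ?subr0 ?addr0 ?add0r ?sub0r ?subr0 ?addr0 ?add0r.
  exact: dot3_eq0.
have aedw : forall i, {ae @mu R, forall s, `[0, l i]%classic s -> dw i s = 0}.
  apply: sum_int_ae; first by move=> i; exact: (hw i).1.
  have := hker (fun i s => - dw i s) Z Z0 Z0 Z0 Z0 0 0 (fun i => @L2N _ _ _ (hw i).1) LZ.
  rewrite bformE /Z0 !sum_dot30 !dot30l !subr0 !addr0.
  move=> H; rewrite -[RHS]H; apply: eq_bigr => i _; congr int0; apply/funext => s.
  by rewrite /Z dot30l dot3Nl; lra.
have wc : forall i s, 0 <= s <= l i -> w i s = WW (src i).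
  by move=> i s hs; rewrite (@H1_const _ _ _ _ (hw i) (aedw i) s hs) hw0.
have WW0 : forall j, WW j = 0.
  apply: (@zero_lemma _ _ _ src tgt l w WW hE hl hconn wc) => // i.
  by rewrite -hwl -(wc i (l i)) // lexx ltW.
have w0 : forall i s, 0 <= s <= l i -> w i s = 0 by move=> i s hs; rewrite wc // WW0.
have aedv : forall i, {ae @mu R, forall s, `[0, l i]%classic s -> dv i s = 0}.
  apply: sum_int_ae; first by move=> i; exact: (hv i).1.
  have := hker Z (fun i s => - dv i s) Z0 Z0 Z0 Z0 0 0 LZ (fun i => @L2N _ _ _ (hv i).1).
  rewrite bformE /Z0 !sum_dot30 !dot30l !subr0 !addr0.
  move=> H; rewrite -[RHS]H; apply: eq_bigr => i _; apply: int0_eq => s hs.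
  by rewrite /Z dot30l dot3Nl w0 // cross30r addr0; lra.
have vc : forall i s, 0 <= s <= l i -> v i s = VV (src i).
  by move=> i s hs; rewrite (@H1_const _ _ _ _ (hv i) (aedv i) s hs) hv0.
have VV0 : forall j, VV j = 0.
  apply: (@zero_lemma _ _ _ src tgt l v VV hE hl hconn vc) => // i.
  by rewrite -hvl -(vc i (l i)) // lexx ltW.
split; first by move=> i s hs; rewrite vc // w0 // VV0.
split; last by [].
move=> i; apply: (@filterS2 _ _ (ae_filter_ringOfSetsType (@mu R)) _ _ _ _ (aedv i) (aedw i)) => s H1 H2 Ds.
by split; [exact: H1 | exact: H2].
Qed.
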